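(* Let $n\ge 3$ and let $(e_1,\dots,e_n)$ be a basis of unit vectors of an $n$-dimensional real inner product space $V$. Then the following are equivalent: (a) For every $1\le k\le n-1$ and every $v\in T_{n-k}$, $P_kv=M_kv$. (b) For every $1\le k\le n-1$, the vector $P_ke_{k+1}$ is parallel to $e_k$ (i.e. a scalar multiple of $e_k$). (c) For every $2\le k\le n-1$, the subspaces $M_k'S_{k-1}$ and $M_k'T_{n-k}$ are orthogonal. (d) For every $1\le k\le n-1$ and every $v\in S_k$, $Q_{n-k}v=M_{k+1}v$. (e) For every $1\le k\le n-1$, the vector $Q_{n-k}e_k$ is parallel to $e_{k+1}$.
   Context: For $k=0,\dots,n$, $S_k=\mathrm{span}\{e_1,\dots,e_k\}$ and $T_k=\mathrm{span}\{e_{n-k+1},\dots,e_n\}$ (so $T_{n-k}=\mathrm{span}\{e_{k+1},\dots,e_n\}$, and $S_0=T_0=\{0\}$). $P_k$ and $Q_k$ denote the orthogonal projections onto $S_k$ and $T_k$ respectively. $M_k$ denotes the orthogonal projection onto the line spanned by $e_k$ (which equals $S_k\cap T_{n-k+1}$), and $M_k'=I-M_k$. *)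

(* Defs.v *)
(* V is modelled as the row space 'rV[R]_n with the standard
   inner product; R is an arbitrary real (ordered) field. *)
From mathcomp Require Import all_boot all_order all_algebra.
Set Implicit Arguments. Unset Strict Implicit. Unset Printing Implicit Defensive.
Import Order.TTheory GRing.Theory Num.Theory.
Local Open Scope ring_scope.

Definition dotv (R : fieldType) (n : nat) (u v : 'rV[R]_n) : R := (u *m v^T) 0 0.

(* Orthogonal projection onto the row space of A : projection onto <<A>>
   along its orthogonal complement kermx A^T = {u | u ⟂ every row of A}.
   A vector v is mapped to  v *m oproj A. *)
Definition oproj (R : fieldType) (m n : nat) (A : 'M[R]_(m, n)) : 'M[R]_n :=
  proj_mx <<A>>%MS (kermx A^T).

(* The basis vectors are e 1, ..., e n (paper indexing; e j for other j is
   irrelevant). Subspaces are given as row spaces of matrices. *)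
(* S_k = span{e_1,...,e_k}  (row i, 0-based, is e_(i+1) if i < k, else 0) *)
Definition Smx (R : fieldType) (n : nat) (e : nat -> 'rV[R]_n) (k : nat)
  : 'M[R]_n := \matrix_(i < n) (if (i < k)%N then e i.+1 else 0).

(* T_k = span{e_(n-k+1),...,e_n} *)
Definition Tmx (R : fieldType) (n : nat) (e : nat -> 'rV[R]_n) (k : nat)
  : 'M[R]_n := \matrix_(i < n) (if (n - k <= i)%N then e i.+1 else 0).

Definition Pk (R : fieldType) n (e : nat -> 'rV[R]_n) k : 'M[R]_n := oproj (Smx e k).
Definition Qk (R : fieldType) n (e : nat -> 'rV[R]_n) k : 'M[R]_n := oproj (Tmx e k).
Definition Mk (R : fieldType) n (e : nat -> 'rV[R]_n) k : 'M[R]_n := oproj (e k).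
Definition Mk' (R : fieldType) n (e : nat -> 'rV[R]_n) k : 'M[R]_n := 1%:M - Mk e k.

Definition unit_basis (R : fieldType) n (e : nat -> 'rV[R]_n) : Prop :=
  row_free (\matrix_(i < n) e i.+1) /\
  (forall i, (1 <= i <= n)%N -> dotv (e i) (e i) = 1).

Definition parallel (R : fieldType) n (u v : 'rV[R]_n) : Prop :=
  exists c : R, u = c *: v.

(* Main.v *)
Require Import Defs.
From mathcomp Require Import all_boot all_order all_algebra.
From mathcomp Require Import zify ring lra.
Set Implicit Arguments. Unset Strict Implicit. Unset Printing Implicit Defensive.
Import Order.TTheory GRing.Theory Num.Theory.
Local Open Scope ring_scope.

Section Gen.
Variable R : realFieldType.
Variable n : nat.
Implicit Types u v w x : 'rV[R]_n.

Lemma dotvC u v : dotv u v = dotv v u.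
Proof. by rewrite /dotv -{1}(trmxK u) -trmx_mul mxE. Qed.

Lemma dotvDl a u v w : dotv (a *: u + v) w = a * dotv u w + dotv v w.
Proof. by rewrite /dotv mulmxDl -scalemxAl !mxE. Qed.

Lemma dotvDr a u v w : dotv w (a *: u + v) = a * dotv w u + dotv w v.
Proof. by rewrite dotvC dotvDl !(dotvC w). Qed.

Lemma dotvBl u v w : dotv (u - v) w = dotv u w - dotv v w.
Proof. by rewrite -[u - v](addrC) -[- v]scaleN1r dotvDl; ring. Qed.

Lemma dotvZl a u w : dotv (a *: u) w = a * dotv u w.
Proof. by rewrite /dotv -scalemxAl mxE. Qed.

Lemma dotv0r u : dotv u 0 = 0.
Proof. by rewrite /dotv trmx0 mulmx0 mxE. Qed.

Lemma dotv0l u : dotv 0 u = 0.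
Proof. by rewrite /dotv mul0mx mxE. Qed.

Lemma dotv_mulT m (A : 'M[R]_(m, n)) x r : (x *m A^T) 0 r = dotv x (row r A).
Proof. by rewrite /dotv !mxE; apply: eq_bigr => i _; rewrite !mxE. Qed.

Lemma dotv_self0 x : dotv x x = 0 -> x = 0.
Proof.
rewrite /dotv mxE => H.
have P0 : forall j : 'I_n, true -> 0 <= x 0 j * x^T j 0.
  by move=> j _; rewrite mxE -expr2 sqr_ge0.
have H2 := psumr_eq0P P0 H.
apply/rowP => j; rewrite mxE.
have := H2 j isT; rewrite mxE => /eqP; rewrite mulf_eq0 orbb => /eqP //.
Qed.

Lemma ortho_sub0 m (A : 'M[R]_(m, n)) x : (x <= A)%MS -> x *m A^T = 0 -> x = 0.
Proof.
move=> /submxP[y ->] H; apply: dotv_self0.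
by rewrite /dotv trmx_mul mulmxA H mul0mx mxE.
Qed.

Lemma oproj_full m (A : 'M[R]_(m, n)) : row_full (<<A>> + kermx A^T)%MS.
Proof.
rewrite /row_full mxrank_disjoint_sum.
  by rewrite mxrank_gen mxrank_ker mxrank_tr subnKC ?rank_leq_col.
apply/eqP/rowV0P => v; rewrite sub_capmx genmxE => /andP[Hv /sub_kermxP Hk].
exact: ortho_sub0 Hv Hk.
Qed.

Lemma oproj_sub m (A : 'M[R]_(m, n)) v : (v *m oproj A <= A)%MS.
Proof. by apply: submx_trans (proj_mx_sub _ _ _) _; rewrite genmxE. Qed.

Lemma oproj_orth m (A : 'M[R]_(m, n)) v r : dotv (v - v *m oproj A) (row r A) = 0.
Proof.
rewrite -dotv_mulT.
have -> : (v - v *m oproj A) *m A^T = 0.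
  apply/sub_kermxP; apply: proj_mx_compl_sub; exact: submx_full (oproj_full A).
by rewrite mxE.
Qed.

Lemma oprojP m (A : 'M[R]_(m, n)) v w : (w <= A)%MS ->
  (forall r, dotv (v - w) (row r A) = 0) -> v *m oproj A = w.
Proof.
move=> Hw Hd.
have Hw0 : (v - w) *m A^T = 0 by apply/rowP => r; rewrite dotv_mulT Hd mxE.
have Hp0 : (v - v *m oproj A) *m A^T = 0.
  by apply/rowP => r; rewrite dotv_mulT oproj_orth mxE.
apply/eqP; rewrite -subr_eq0; apply/eqP; apply: (ortho_sub0 (A:=A)).
  by rewrite addmx_sub ?eqmx_opp ?oproj_sub.
have -> : v *m oproj A - w = (v - w) - (v - v *m oproj A).
  by apply/rowP => j; rewrite !mxE; ring.
by rewrite mulmxBl Hw0 Hp0 subrr.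
Qed.

Lemma span_ind m (A : 'M[R]_(m, n)) (P : 'rV[R]_n -> Prop) :
  P 0 -> (forall a x y, P x -> P y -> P (a *: x + y)) ->
  (forall r, P (row r A)) -> forall u, (u <= A)%MS -> P u.
Proof.
move=> P0 PD Pr u /submxP[D ->]; rewrite mulmx_sum_row.
by elim/big_rec: _ => // i x _ Px; apply: PD.
Qed.
End Gen.
Section Spec.
Variable R : realFieldType.
Variable n : nat.
Variable e : nat -> 'rV[R]_n.
Hypothesis Hu : forall i, (1 <= i <= n)%N -> dotv (e i) (e i) = 1.

Definition g i j := dotv (e i) (e j).
Lemma gC i j : g i j = g j i.
Proof. exact: dotvC. Qed.

Lemma Mk_form k v : (1 <= k <= n)%N -> v *m Mk e k = dotv v (e k) *: e k.
Proof.
move=> Hk; apply: oprojP; first by rewrite scalemx_sub.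
by move=> r; rewrite row_id dotvBl dotvZl Hu // mulr1 subrr.
Qed.

Lemma Mk'_dot k u w : (1 <= k <= n)%N ->
  dotv (u *m Mk' e k) (w *m Mk' e k) = dotv u w - dotv u (e k) * dotv w (e k).
Proof.
move=> Hk; rewrite /Mk' !mulmxBr !mulmx1 !Mk_form //.
rewrite !dotvBl !(dotvC _ (_ - _)) !dotvBl !dotvZl !(dotvC _ (_ *: _)) !dotvZl Hu //.
rewrite !(dotvC (e k)) (dotvC w u); ring.
Qed.

Lemma row_S k r : row r (Smx e k) = if (r < k)%N then e r.+1 else 0.
Proof. by rewrite rowK. Qed.
Lemma row_T k r : row r (Tmx e k) = if (n - k <= r)%N then e r.+1 else 0.
Proof. by rewrite rowK. Qed.

Lemma rowS_e k j : (1 <= j)%N -> (j <= k)%N -> (j <= n)%N ->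
  exists r : 'I_n, row r (Smx e k) = e j.
Proof.
move=> H1 H2 H3; have Hr : (j.-1 < n)%N by lia.
exists (Ordinal Hr); rewrite row_S /= ifT; last by lia.
by rewrite prednK.
Qed.

Lemma rowT_e k j : (k < j)%N -> (j <= n)%N -> exists r : 'I_n, row r (Tmx e (n - k)) = e j.
Proof.
move=> H1 H2; have Hr : (j.-1 < n)%N by lia.
exists (Ordinal Hr); rewrite row_T /= ifT; last by lia.
by rewrite prednK //; lia.
Qed.

Lemma eS k j : (1 <= j)%N -> (j <= k)%N -> (j <= n)%N -> (e j <= Smx e k)%MS.
Proof. by move=> H1 H2 H3; have [r <-] := rowS_e H1 H2 H3; exact: row_sub. Qed.

Lemma eT k j : (k < j)%N -> (j <= n)%N -> (e j <= Tmx e (n - k))%MS.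
Proof. by move=> H1 H2; have [r <-] := rowT_e H1 H2; exact: row_sub. Qed.

Definition Gc := forall i k j, (0 < i)%N -> (i < k)%N -> (k < j)%N -> (j <= n)%N ->
  g i j = g i k * g k j.

Lemma G_P (HG : Gc) k j : (0 < k)%N -> (k < j)%N -> (j <= n)%N ->
  e j *m Pk e k = g j k *: e k.
Proof.
move=> H1 H2 H3; apply: oprojP; first by rewrite scalemx_sub // eS //; lia.
move=> r; have Hrn := ltn_ord r; rewrite row_S; case: ifP => Hr; last by rewrite dotv0r.
rewrite dotvBl dotvZl.
have [->|Hne] := eqVneq r.+1 k; first by rewrite /g Hu ?mulr1 ?subrr //; lia.
have H := HG r.+1 k j isT ltac:(lia) H2 H3; rewrite /g in H.
rewrite /g (dotvC (e j) (e r.+1)) H (dotvC (e j) (e k)) (dotvC (e k) (e r.+1)); ring.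
Qed.

Lemma G_Q (HG : Gc) k i : (0 < i)%N -> (i <= k)%N -> (k < n)%N ->
  e i *m Qk e (n - k) = g i k.+1 *: e k.+1.
Proof.
move=> H1 H2 H3; apply: oprojP; first by rewrite scalemx_sub // eT //.
move=> r; have Hrn := ltn_ord r; rewrite row_T; case: ifP => Hr; last by rewrite dotv0r.
rewrite dotvBl dotvZl.
have [->|Hne] := eqVneq r.+1 k.+1; first by rewrite /g Hu ?mulr1 ?subrr //; lia.
have H := HG i k.+1 r.+1 H1 ltac:(lia) ltac:(lia) ltac:(lia); rewrite /g in H.
rewrite /g H; ring.
Qed.

Lemma BtoG : (forall j k, (0 < j)%N -> (j <= k)%N -> (k < n)%N ->
   g k.+1 j = g k.+1 k * g k j) -> Gc.
Proof.
move=> HB i k j; elim: j i k => [|j IH] i k Hi Hik Hkj Hjn; first by lia.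
have [Hkj'|Hkj'] := ltnP k j.
  rewrite gC (HB i j) //; try lia.
  rewrite (gC j i) (IH i k) //; try lia.
  rewrite (gC k j.+1) (HB k j) //; try lia.
  rewrite (gC j k); ring.
have -> : k = j by lia.
rewrite gC (HB i j) //; try lia.
rewrite (gC j i) (gC j j.+1); ring.
Qed.

Lemma EtoG : (forall k j, (0 < k)%N -> (k < j)%N -> (j <= n)%N ->
   g k j = g k k.+1 * g k.+1 j) -> Gc.
Proof.
move=> HE.
suff H : forall d i k j, k = (i + d.+1)%N -> (0 < i)%N -> (k < j)%N -> (j <= n)%N ->
  g i j = g i k * g k j.
  by move=> i k j Hi Hik Hkj Hjn; apply: (H (k - i.+1)%N) => //; lia.
elim=> [|d IH] i k j Hk Hi Hkj Hjn.
  by rewrite Hk addn1 HE //; lia.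
rewrite (HE i j) //; try lia.
rewrite (HE i k) //; try lia.
rewrite (IH i.+1 k j) //; try lia.
ring.
Qed.
End Spec.
Theorem proposition3 (R : realFieldType) (n : nat) (e : nat -> 'rV[R]_n) :
  (3 <= n)%N -> unit_basis e ->
  [<->
   (* (a) *)
   (forall k, (1 <= k <= n - 1)%N -> forall v : 'rV[R]_n,
      (v <= Tmx e (n - k))%MS -> v *m Pk e k = v *m Mk e k);
   (* (b) *)
   (forall k, (1 <= k <= n - 1)%N -> parallel (e k.+1 *m Pk e k) (e k));
   (* (c) *)
   (forall k, (2 <= k <= n - 1)%N -> forall u w : 'rV[R]_n,
      (u <= Smx e k.-1)%MS -> (w <= Tmx e (n - k))%MS ->
      dotv (u *m Mk' e k) (w *m Mk' e k) = 0);
   (* (d) *)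
   (forall k, (1 <= k <= n - 1)%N -> forall v : 'rV[R]_n,
      (v <= Smx e k)%MS -> v *m Qk e (n - k) = v *m Mk e k.+1);
   (* (e) *)
   (forall k, (1 <= k <= n - 1)%N -> parallel (e k *m Qk e (n - k)) (e k.+1))].
Proof.
move=> Hn [_ Hu].
tfae.
- move=> Ha k Hk; exists (g e k.+1 k).
  rewrite (Ha k Hk) ?eT ?(Mk_form Hu) //; lia.
- move=> Hb.
  have HG : Gc e.
    apply: BtoG => j k Hj Hjk Hkn.
    have [c Hc] := Hb k ltac:(lia).
    have Hd : forall j', (0 < j')%N -> (j' <= k)%N -> g e k.+1 j' = c * g e k j'.
      move=> j' H1 H2; have [r Hr] := rowS_e e H1 H2 ltac:(lia).
      have := oproj_orth (Smx e k) (e k.+1) r.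
      rewrite Hr; rewrite /Pk in Hc; rewrite Hc dotvBl dotvZl.
      by move/eqP; rewrite subr_eq0 => /eqP.
    have Hkk : g e k k = 1 by apply: Hu; lia.
    rewrite (Hd j) ?(Hd k) ?Hkk ?mulr1 //; lia.
  move=> k Hk u w Hu' Hw; rewrite Mk'_dot //; last by lia.
  move: w Hw; apply: (span_ind (P := fun u => forall w, (w <= Tmx e (n - k))%MS ->
     dotv u w - dotv u (e k) * dotv w (e k) = 0)) Hu'.
  + by move=> w _; rewrite !dotv0l mul0r subrr.
  + move=> a x y Hx Hy w Hw; rewrite !dotvDl.
    move: (Hx w Hw) (Hy w Hw) => /eqP + /eqP; rewrite !subr_eq0 => /eqP -> /eqP ->; ring.
  + move=> r; have Hrn := ltn_ord r; rewrite row_S; case: ifP => Hr; last first.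
      by move=> w _; rewrite !dotv0l mul0r subrr.
    apply: (span_ind (P := fun w => dotv (e r.+1) w - dotv (e r.+1) (e k) * dotv w (e k) = 0)).
    * by rewrite !dotv0r dotv0l mulr0 subrr.
    * move=> a x y Hx Hy; rewrite dotvDr dotvDl.
      move: Hx Hy => /eqP + /eqP; rewrite !subr_eq0 => /eqP -> /eqP ->; ring.
    * move=> r'; have Hrn' := ltn_ord r'; rewrite row_T; case: ifP => Hr'; last first.
        by rewrite dotv0r dotv0l mulr0 subrr.
      have H := HG r.+1 k r'.+1 isT ltac:(lia) ltac:(lia) ltac:(lia).
      rewrite /g in H; rewrite H (dotvC (e r'.+1) (e k)); ring.
- move=> Hc.
  have HG : Gc e.
    move=> i k j Hi Hik Hkj Hjn.
    have := Hc k ltac:(lia) (e i) (e j) (eS e (k := k.-1) Hi ltac:(lia) ltac:(lia))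
      (eT e Hkj Hjn).
    rewrite Mk'_dot //; last by lia.
    move/eqP; rewrite subr_eq0 => /eqP; rewrite /g => ->.
    by rewrite (dotvC (e j) (e k)).
  move=> k Hk v Hv.
  apply: (span_ind (P := fun v => v *m Qk e (n - k) = v *m Mk e k.+1)) Hv.
  + by rewrite !mul0mx.
  + by move=> a x y Hx Hy; rewrite !mulmxDl -!scalemxAl Hx Hy.
  + move=> r; have Hrn := ltn_ord r; rewrite row_S; case: ifP => Hr; last by rewrite !mul0mx.
    rewrite (G_Q Hu HG) ?(Mk_form Hu) //; lia.
- move=> Hd k Hk; exists (g e k k.+1).
  rewrite (Hd k Hk) ?eS ?(Mk_form Hu) //; lia.
- move=> He.
  have HG : Gc e.
    apply: EtoG => k j Hk Hkj Hjn.
    have [c Hc] := He k ltac:(lia).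
    have Hd : forall j', (k < j')%N -> (j' <= n)%N -> g e k j' = c * g e k.+1 j'.
      move=> j' H1 H2; have [r Hr] := rowT_e e H1 H2.
      have := oproj_orth (Tmx e (n - k)) (e k) r.
      rewrite Hr; rewrite /Qk in Hc; rewrite Hc dotvBl dotvZl.
      by move/eqP; rewrite subr_eq0 => /eqP.
    have Hkk : g e k.+1 k.+1 = 1 by apply: Hu; lia.
    rewrite (Hd j) ?(Hd k.+1) ?Hkk ?mulr1 //; lia.
  move=> k Hk v Hv.
  apply: (span_ind (P := fun v => v *m Pk e k = v *m Mk e k)) Hv.
  + by rewrite !mul0mx.
  + by move=> a x y Hx Hy; rewrite !mulmxDl -!scalemxAl Hx Hy.
  + move=> r; have Hrn := ltn_ord r; rewrite row_T; case: ifP => Hr; last by rewrite !mul0mx.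
    rewrite (G_P Hu HG) ?(Mk_form Hu) //; lia.
Qed.
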